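(* Let $k$ be a field of characteristic zero and let $A=\bigoplus_{i\ge 0}A_i$ be a standard graded Artinian $k$-algebra. Then $A$ has the weak Lefschetz property (respectively, the strong Lefschetz property) if and only if there exists a linear form $l\in A_1$ such that the associated graded ring $Gr_{l}(A)$ has the weak Lefschetz property (respectively, the strong Lefschetz property).
   Context: For a linear form $l\in A_1$, let $r$ be the least integer with $l^r=0$. The associated graded ring of $A$ with respect to $l$ is $Gr_l(A)=A/(l)\oplus (l)/(l^2)\oplus\cdots\oplus (l^{r-1})/(l^r)$, with multiplication induced from $A$ and with the grading inherited from the grading of $A$. A finite graded module $M=\bigoplus_i M_i$ over a standard graded $k$-algebra $R$ (in particular $R$ itself) has the weak Lefschetz property (WLP) if there is a linear form $\ell\in R_1$ such that each multiplication map $\times\ell\colon M_i\to M_{i+1}$ has maximal rank (is injective or surjective); it has the strong Lefschetz property (SLP) if there is $\ell\in R_1$ such that $\times\ell^d\colon M_i\to M_{i+d}$ has maximal rank for all $d>0$ and all $i$. *)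

(* Defs.v *)
From HB Require Import structures.
From mathcomp Require Import all_boot all_order all_algebra.
From mathcomp Require Import falgebra.
Set Implicit Arguments. Unset Strict Implicit. Unset Printing Implicit Defensive.
Import GRing.Theory.
Local Open Scope ring_scope.

Section Defs.
Variables (k : fieldType) (A : falgType k).

Definition std_graded_artinian (G : nat -> {vspace A}) : Prop :=
  (forall x y : A, x * y = y * x) /\
  [/\ (forall n, directv (\sum_(i < n) G i)%VS),
      (exists n, (\sum_(i < n) G i)%VS = fullv),
      G 0%N = <[1]>%VS,
      (forall i j, (G i * G j <= G (i + j)%N)%VS) &
      (forall i, G i.+1 = (G 1%N * G i)%VS)].

Definition mult_maxrank (G : nat -> {vspace A}) (f : A) (i e : nat) : Prop :=
  (forall x, x \in G i -> f * x = 0 -> x = 0) \/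
  (forall y, y \in G (i + e)%N -> exists2 x, x \in G i & f * x = y).

Definition WLP (G : nat -> {vspace A}) : Prop :=
  exists2 ell, ell \in G 1%N & forall i, mult_maxrank G ell i 1.

Definition SLP (G : nat -> {vspace A}) : Prop :=
  exists2 ell, ell \in G 1%N &
    forall d i, (0 < d)%N -> mult_maxrank G (ell ^+ d) i d.

Definition nil_index (l : A) (r : nat) : Prop :=
  l ^+ r = 0 /\ forall s, (s < r)%N -> l ^+ s != 0.

Definition idl (G : nat -> {vspace A}) (l : A) (j d : nat) : {vspace A} :=
  ((<[l ^+ j]> * fullv) :&: G d)%VS.

(* Gr_l(A)_d = (+)_{j<r} (l^j)_d / (l^(j+1))_d.  An element is represented by
   a family x : nat -> A of representatives x j \in (l^j)_d (j < r);
   two families represent the same element iff their difference lies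
   componentwise in (l^(j+1))_d. *)
Definition gr_rep G l r d (x : nat -> A) : Prop :=
  forall j, (j < r)%N -> x j \in idl G l j d.

Definition gr_zero G l r d (x : nat -> A) : Prop :=
  forall j, (j < r)%N -> x j \in idl G l j.+1 d.

(* product in Gr_l(A) on representatives:
   (x mod l^(i+1)) (y mod l^(j+1)) = xy mod l^(i+j+1) *)
Definition gr_mul (x y : nat -> A) : nat -> A :=
  fun m => \sum_(j < m.+1) x j * y (m - j)%N.

Definition gr_one : nat -> A := fun m => if m == 0%N then 1 else 0.

Definition gr_exp (x : nat -> A) (n : nat) : nat -> A := iter n (gr_mul x) gr_one.

Definition gr_maxrank G l r (P : nat -> A) (i e : nat) : Prop :=
  (forall x, gr_rep G l r i x -> gr_zero G l r (i + e) (gr_mul P x) ->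
      gr_zero G l r i x) \/
  (forall y, gr_rep G l r (i + e) y -> exists2 x, gr_rep G l r i x &
      gr_zero G l r (i + e) (fun m => y m - gr_mul P x m)).

Definition Gr_WLP (G : nat -> {vspace A}) (l : A) : Prop :=
  exists2 r, nil_index l r &
    exists2 L, gr_rep G l r 1 L & forall i, gr_maxrank G l r L i 1.

Definition Gr_SLP (G : nat -> {vspace A}) (l : A) : Prop :=
  exists2 r, nil_index l r &
    exists2 L, gr_rep G l r 1 L &
      forall d i, (0 < d)%N -> gr_maxrank G l r (gr_exp L d) i d.

End Defs.

(* Main.v *)
Require Import Defs.
From HB Require Import structures.
From mathcomp Require Import all_boot all_order all_algebra.
From mathcomp Require Import falgebra.
Set Implicit Arguments. Unset Strict Implicit. Unset Printing Implicit Defensive.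
Import GRing.Theory.
Import VectorInternalTheory.
Local Open Scope ring_scope.

Lemma poly_rowfree (K : fieldType) p n (MP : 'M[{poly K}]_(p, n)) :
  row_free (map_mx (horner_eval 0) MP) ->
  exists2 q : {poly K}, q != 0 &
    forall s, q.[s] != 0 -> row_free (map_mx (horner_eval s) MP).
Proof.
case/row_freeP => N HN.
pose q := \det (MP *m map_mx polyC N).
have qs s : q.[s] = \det (map_mx (horner_eval s) MP *m N).
  rewrite -horner_evalE -det_map_mx map_mxM; congr (\det (_ *m _)).
  by apply/matrixP => i j; rewrite !mxE /= horner_evalE hornerC.
exists q.
  apply/eqP => q0; have := qs 0; rewrite q0 horner0 HN det1 => /eqP.
  by rewrite eq_sym oner_eq0.
move=> s qs0.
have U : (map_mx (horner_eval s) MP *m N) \in unitmx by rewrite unitmxE unitfE -qs.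
move: U; rewrite -row_free_unit /row_free => /eqP rk.
rewrite eqn_leq rank_leq_row /= -{1}rk; exact: mxrankM_maxl.
Qed.

Section Main.
Variables (k : fieldType) (A : falgType k).
Hypothesis comm : forall x y : A, x * y = y * x.

Lemma mem_lineA (v u : A) : (u \in (<[v]> * fullv)%VS) <-> exists w, u = v * w.
Proof.
split.
  move=> H.
  have sub: (<[v]> * fullv <= limg (amull v))%VS.
    apply/prodvP => a b /vlineP[c ->] _.
    apply/memv_imgP; exists (c *: b); first exact: memvf.
    by rewrite lfunE /= -scalerAl scalerAr.
  have /memv_imgP[w _ ->] := subvP sub _ H.
  by exists w; rewrite lfunE.
by case=> w ->; apply: memv_mul; [apply: memv_line | apply: memvf].
Qed.

Lemma mem_lineA_mul (a b u w : A) : u \in (<[a]> * fullv)%VS ->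
  w \in (<[b]> * fullv)%VS -> u * w \in (<[a * b]> * fullv)%VS.
Proof.
move=> /mem_lineA[u' ->] /mem_lineA[w' ->]; apply/mem_lineA; exists (u' * w').
by rewrite -mulrA (mulrA u') (comm u' b) -!mulrA.
Qed.


Variables (G : nat -> {vspace A}) (l : A) (r : nat).
Hypothesis lr0 : l ^+ r = 0.
Hypothesis Gmul : forall i j, (G i * G j <= G (i + j)%N)%VS.

Local Notation F := (idl G l).

Lemma memF x m d : (x \in F m d) = (x \in (<[l ^+ m]> * fullv)%VS) && (x \in G d).
Proof. by rewrite /idl memv_cap. Qed.

Lemma lineA0 m x : (r <= m)%N -> x \in (<[l ^+ m]> * fullv)%VS -> x = 0.
Proof.
move=> rm /mem_lineA[w ->]; by rewrite -(subnKC rm) exprD lr0 mul0r mul0r.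
Qed.

Lemma FS m d : (F m.+1 d <= F m d)%VS.
Proof.
apply/subvP=> x; rewrite !memF => /andP[/mem_lineA[w ->] ->]; rewrite andbT.
by apply/mem_lineA; exists (l * w); rewrite exprS (comm l) mulrA.
Qed.

Lemma FSS m m' d : (m <= m')%N -> (F m' d <= F m d)%VS.
Proof.
move=> /subnKC <-; elim: (m' - m)%N => [|n IH]; first by rewrite addn0.
by apply: subv_trans IH; rewrite addnS; apply: FS.
Qed.

Lemma F_sub m d : (F m d <= G d)%VS.
Proof. by apply/subvP=> x; rewrite memF => /andP[]. Qed.

Lemma F0 d : F 0 d = G d.
Proof.
apply/vspaceP=> x; rewrite memF; apply/andP/idP=> [[]//|Gx]; split=> //.
by apply/mem_lineA; exists x; rewrite expr0 mul1r.
Qed.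

Lemma Fr m d x : (r <= m)%N -> x \in F m d -> x = 0.
Proof. by move=> rm; rewrite memF => /andP[/(lineA0 rm)]. Qed.

Lemma F_mul a b i e x y : x \in F a i -> y \in F b e -> x * y \in F (a + b) (i + e).
Proof.
rewrite !memF => /andP[xa xi] /andP[yb ye]; apply/andP; split.
  by rewrite exprD; apply: mem_lineA_mul.
by apply: (subvP (Gmul i e)); apply: memv_mul.
Qed.

Definition ladic (x : nat -> A) := forall j, (j < r)%N -> x j \in (<[l ^+ j]> * fullv)%VS.

Lemma rep_ladic d x : gr_rep G l r d x -> ladic x.
Proof. by move=> H j /H; rewrite memF => /andP[]. Qed.

Definition pol (x : nat -> A) : {poly A} := \poly_(i < r) x i.

Definition Phi (t : k) (x : nat -> A) : A := \sum_(m < r) t ^+ m *: x m.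

Lemma PhiE t x : Phi t x = (pol x).[t%:A].
Proof.
rewrite (horner_coef_wide _ (size_poly _ _)) /Phi; apply: eq_bigr => i _.
by rewrite coef_poly ltn_ord -(rmorphXn (in_alg A)) /= mulr_algr.
Qed.

Lemma polM P x : ladic P -> ladic x -> pol P * pol x = pol (gr_mul P x).
Proof.
move=> HP Hx; apply/polyP=> i; rewrite coefM coef_poly /gr_mul.
case: ltnP => ir.
  apply: eq_bigr => j _; rewrite !coef_poly.
  have jr : (j < r)%N by apply: leq_ltn_trans ir; rewrite -ltnS.
  by rewrite jr (leq_ltn_trans (leq_subr _ _) ir).
apply: big1 => j _; rewrite !coef_poly.
case: ifP => jr; last by rewrite mul0r.
case: ifP => ijr; last by rewrite mulr0.
have := mem_lineA_mul (HP _ jr) (Hx _ ijr).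
have ji : (j <= i)%N by rewrite -ltnS.
by rewrite -exprD subnKC //; apply: lineA0.
Qed.

Lemma PhiM t P x : ladic P -> ladic x -> Phi t (gr_mul P x) = Phi t P * Phi t x.
Proof.
move=> HP Hx; rewrite !PhiE -polM // hornerM_comm //.

Qed.


Lemma rep_mul e i P x : gr_rep G l r e P -> gr_rep G l r i x ->
  gr_rep G l r (e + i) (gr_mul P x).
Proof.
move=> HP Hx m mr; rewrite /gr_mul; apply: memv_suml => j _.
have jm : (j <= m)%N by rewrite -ltnS.
have := F_mul (HP _ (leq_ltn_trans jm mr)) (Hx _ (leq_ltn_trans (leq_subr j m) mr)).
by rewrite subnKC.
Qed.

Hypothesis G0 : 1 \in G 0.

Lemma rep_one : gr_rep G l r 0 (@gr_one k A).
Proof.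
move=> m mr; rewrite /gr_one; case: eqP => [->|_]; last exact: mem0v.
by rewrite F0.
Qed.

Lemma rep_exp e P d : gr_rep G l r e P -> gr_rep G l r (e * d) (gr_exp P d).
Proof.
move=> HP; elim: d => [|d IH]; first by rewrite muln0; exact: rep_one.
by rewrite mulnS; apply: rep_mul.
Qed.

Lemma Phi_one t : (0 < r)%N -> Phi t (@gr_one k A) = 1.
Proof.
move=> r0; rewrite /Phi (bigD1 (Ordinal r0)) //= big1 ?addr0.
  by rewrite expr0 scale1r.
move=> i /eqP ne; rewrite /gr_one; case: eqP => [e|_]; last by rewrite scaler0.
by case: ne; apply: val_inj.
Qed.

Lemma Phi_exp t e P d : (0 < r)%N -> gr_rep G l r e P ->
  Phi t (gr_exp P d) = Phi t P ^+ d.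
Proof.
move=> r0 HP; elim: d => [|d IH]; first by rewrite Phi_one.
rewrite /= PhiM -/(gr_exp P d) ?IH ?exprS //; first exact: rep_ladic HP.
exact: rep_ladic (rep_exp _ HP).
Qed.

Lemma Phi_mem t d x : gr_rep G l r d x -> Phi t x \in G d.
Proof.
move=> Hx; apply: memv_suml => m _; apply: memvZ.
exact: (subvP (F_sub _ _)) (Hx _ (ltn_ord m)).
Qed.

Lemma Phi_lin t p (al : 'I_p -> k) (y : 'I_p -> nat -> A) :
  Phi t (fun m => \sum_c al c *: y c m) = \sum_c al c *: Phi t (y c).
Proof.
rewrite /Phi; under eq_bigr do rewrite scaler_sumr.
rewrite exchange_big; apply: eq_bigr => c _; rewrite scaler_sumr.
by apply: eq_bigr => m _; rewrite !scalerA mulrC.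
Qed.

Lemma grmul_lin P p (al : 'I_p -> k) (y : 'I_p -> nat -> A) m :
  gr_mul P (fun m => \sum_c al c *: y c m) m = \sum_c al c *: gr_mul P (y c) m.
Proof.
rewrite /gr_mul; under eq_bigr do rewrite mulr_sumr.
rewrite exchange_big; apply: eq_bigr => c _; rewrite scaler_sumr.
by apply: eq_bigr => j _; rewrite scalerAr.
Qed.

Lemma zero_lin d p (al : 'I_p -> k) (y : 'I_p -> nat -> A) :
  (forall c, gr_zero G l r d (y c)) -> gr_zero G l r d (fun m => \sum_c al c *: y c m).
Proof.
by move=> H j jr; apply: memv_suml => c _; apply: memvZ; apply: H.
Qed.

Lemma rep_lin d p (al : 'I_p -> k) (y : 'I_p -> nat -> A) :
  (forall c, gr_rep G l r d (y c)) -> gr_rep G l r d (fun m => \sum_c al c *: y c m).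
Proof.
by move=> H j jr; apply: memv_suml => c _; apply: memvZ; apply: H.
Qed.



Lemma rowlin p n (v : 'rV[k]_p) (X : 'I_p -> 'M[k]_(r, n)) :
  v *m (\matrix_(c < p) mxvec (X c)) = mxvec (\sum_c v 0 c *: X c).
Proof.
rewrite mulmx_sum_row linear_sum; apply: eq_bigr => c _.
by rewrite rowK linearZ.
Qed.

Lemma claimC d p (y : 'I_p -> nat -> A) :
  (forall c, gr_rep G l r d (y c)) ->
  (forall al : 'I_p -> k, gr_zero G l r d (fun m => \sum_c al c *: y c m) ->
     forall c, al c = 0) ->
  exists2 q : {poly k}, q != 0 & forall s, q.[s] != 0 ->
    forall al : 'I_p -> k, \sum_c al c *: Phi s^-1 (y c) = 0 -> forall c, al c = 0.
Proof.
move=> Hy Hind.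
pose pi := fun m : nat => ((\1 - projv (F m.+1 d))%VF : 'End(A)).
have piE m a : pi m a = a - projv (F m.+1 d) a by rewrite /pi add_lfunE opp_lfunE id_lfunE.
have pi1 m a : a \in F m.+1 d -> pi m a = 0.
  by move=> H; rewrite piE projv_id ?subrr.
have pi2 m a : pi m a = 0 -> a \in F m.+1 d.
  by rewrite piE => /eqP; rewrite subr_eq0 => /eqP ->; apply: memv_proj.
pose co c (m : nat) m' (j : 'I_(dim A)) := v2r (pi m (y c m')) 0 j.
pose EP c (m : 'I_r) j : {poly k} := \sum_(m' < m.+1) co c m m' j *: 'X^(m - m').
pose MP : 'M[{poly k}]_(p, r * dim A) := \matrix_(c < p) mxvec (\matrix_(m < r, j < dim A) EP c m j).
have evalMP s : map_mx (horner_eval s) MP = \matrix_c mxvec (\matrix_(m < r, j < dim A) (EP c m j).[s]).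
  apply/row_matrixP => c; rewrite -map_row !rowK map_mxvec; congr mxvec.
  by apply/matrixP => m j; rewrite !mxE.
have EP0 c m j : (EP c m j).[0] = co c m m j.
  rewrite horner_sum big_ord_recr /= subnn hornerZ hornerXn expr0 mulr1 big1 ?add0r //.
  move=> m' _; rewrite hornerZ hornerXn expr0n /=.
  by rewrite subn_eq0 leqNgt ltn_ord /= mulr0.
have [q0 q0n Hq0] : exists2 q : {poly k}, q != 0 &
    forall s, q.[s] != 0 -> row_free (map_mx (horner_eval s) MP).
  apply: poly_rowfree; apply: inj_row_free => v; rewrite evalMP rowlin => /eqP.
  rewrite mxvec_eq0 => /eqP H0.
  have Z : gr_zero G l r d (fun m => \sum_c v 0 c *: y c m).
    move=> m mr; apply: (pi2 m); apply: v2r_inj; rewrite linear0.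
    apply/rowP => j; rewrite [RHS]mxE.
    have := congr1 (fun M : 'M[k]_(r, dim A) => M (Ordinal mr) j) H0; rewrite /= !summxE mxE => <-.
    rewrite !linear_sum summxE; apply: eq_bigr => c _.
    by rewrite !mxE EP0 /co /= !linearZ /= mxE.
  by apply/rowP => c; rewrite mxE; apply: Hind Z c.
exists ('X * q0); first by rewrite mulf_neq0 ?polyX_eq0.
move=> s; rewrite hornerM hornerX mulf_eq0 negb_or => /andP[s0 qs0] al Hal.
have EPs c m j : (EP c m j).[s] = v2r (s ^+ m *: pi m (Phi s^-1 (y c))) 0 j.
  rewrite /Phi linear_sum scaler_sumr linear_sum summxE horner_sum.
  under eq_bigr do rewrite hornerZ hornerXn.
  rewrite (big_ord_widen r (fun m' => co c m m' j * s ^+ (m - m'))) ?ltn_ord //.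
  rewrite big_mkcond; apply: eq_bigr => m' _; case: ifP => lt.
    rewrite !linearZ /= !mxE /co mulrA [RHS]mulrC; congr (_ * _).
    by rewrite exprB ?unitfE // exprVn.
  rewrite linearZ /= pi1 ?scaler0 ?linear0 ?mxE //.
  apply: memvZ; apply: (subvP (FSS (m := m.+1) (m' := m') d _)) (Hy c m' (ltn_ord m')).
  by rewrite leqNgt lt.
have : row_free (map_mx (horner_eval s) MP) by apply: Hq0.
move/row_free_inj => inj.
have : (\row_c al c) *m map_mx (horner_eval s) MP = 0 *m map_mx (horner_eval s) MP.
  rewrite mul0mx evalMP rowlin; apply/eqP; rewrite mxvec_eq0; apply/eqP.
  apply/matrixP => m j; rewrite !mxE summxE.
  under eq_bigr do rewrite !mxE EPs.
  transitivity (v2r (s ^+ m *: pi m (\sum_c al c *: Phi s^-1 (y c))) 0 j); last first.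
    by rewrite Hal !linear0 mxE.
  rewrite linear_sum scaler_sumr linear_sum summxE; apply: eq_bigr => c _.
  by rewrite !linearZ /= !linearZ /= !mxE mulrCA.
move/inj => /rowP H c; have := H c; rewrite !mxE //.
Qed.


Definition indep d p (y : 'I_p -> nat -> A) :=
  forall al : 'I_p -> k, gr_zero G l r d (fun m => \sum_c al c *: y c m) ->
     forall c, al c = 0.

Lemma lemmaD_aux d n : (n <= r)%N ->
  exists2 p, p = \dim (F (r - n) d) &
  exists y : 'I_p -> nat -> A, [/\ forall c, gr_rep G l r d (y c),
     forall c j, (j < r - n)%N -> y c j = 0 & indep d y].
Proof.
elim: n => [_|n IH nr].
  exists 0%N.
    apply/esym/eqP; rewrite dimv_eq0 -subv0; apply/subvP => x.
    by rewrite subn0 => /(Fr (leqnn r)) ->; rewrite mem0v.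
  by exists (fun _ _ => 0); split => [[]|[]|al _ []].
have [p1 p1E [y1 [y1r y1s y1i]]] := IH (ltnW nr).
set m := (r - n.+1)%N.
have mE : (r - n)%N = m.+1 by rewrite /m subnS prednK // subn_gt0.
rewrite mE in p1E y1s.
pose C := (F m d :\: F m.+1 d)%VS.
pose B := vbasis C.
pose y (c : 'I_(\dim C + p1)) : nat -> A :=
  match split c with inl a => fun j => if j == m then B`_a else 0 | inr b => y1 b end.
have yL a : y (lshift p1 a) = fun j => if j == m then B`_a else 0.
  by rewrite /y -[lshift p1 a]/(unsplit (inl _ a)) unsplitK.
have yR b : y (rshift (\dim C) b) = y1 b.
  by rewrite /y -[rshift _ b]/(unsplit (inr _ b)) unsplitK.
have BC (a : 'I_(\dim C)) : B`_a \in F m d.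
  apply: (subvP (diffvSl (F m d) (F m.+1 d))); apply: vbasis_mem; apply: mem_nth.
  by rewrite size_tuple.
exists (\dim C + p1)%N.
  by rewrite p1E -(dimv_cap_compl (F m d) (F m.+1 d)) (capv_idPr (FS _ _)) addnC.
exists y; split.
- move=> c; rewrite -(splitK c); case: (split c) => [a|b] /=.
    by rewrite yL => j jr; case: eqP => [->|_]; [exact: BC | exact: mem0v].
  by rewrite yR.
- move=> c j jm; rewrite -(splitK c); case: (split c) => [a|b] /=.
    by rewrite yL; case: eqP => // ejm; rewrite ejm ltnn in jm.
  by rewrite yR y1s // (ltn_trans jm).
move=> al Z.
have mr : (m < r)%N by rewrite /m -subSn // subSS leq_subr.
have alL : forall a, al (lshift p1 a) = 0.
  have := Z m mr; rewrite big_split_ord /=.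
  under eq_bigr do rewrite yL eqxx.
  under [X in _ + X]eq_bigr do rewrite yR y1s // scaler0.
  rewrite big1_eq addr0 => HB.
  have HC : \sum_(a < \dim C) al (lshift p1 a) *: B`_a \in C.
    by apply: memv_suml => a _; apply: memvZ; apply: vbasis_mem; apply: mem_nth; rewrite size_tuple.
  have H0 : \sum_(a < \dim C) al (lshift p1 a) *: B`_a = 0.
    by apply/eqP; rewrite -memv0 -(capv_diff (F m d) (F m.+1 d)) memv_cap HC HB.
  by move: (basis_free (vbasisP C)) => /freeP /(_ _ H0).
have alR : forall b, al (rshift (\dim C) b) = 0.
  apply: y1i => j jr; have := Z j jr; rewrite big_split_ord /= big1 ?add0r.
    by under eq_bigr do rewrite yR.
  by move=> a _; rewrite alL scale0r.
by move=> c; rewrite -(splitK c); case: (split c) => [a|b] /=; [apply: alL | apply: alR].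
Qed.

Lemma lemmaD d : exists y : 'I_(\dim (G d)) -> nat -> A,
  (forall c, gr_rep G l r d (y c)) /\ indep d y.
Proof.
have [p pE [y [yr _ yi]]] := lemmaD_aux d (leqnn r).
move: y yr yi; rewrite pE subnn F0 => y yr yi; by exists y.
Qed.


Lemma span_full (U : {vspace A}) (v : 'I_(\dim U) -> A) :
  (forall c, v c \in U) ->
  (forall al : 'I_(\dim U) -> k, \sum_c al c *: v c = 0 -> forall c, al c = 0) ->
  forall a, a \in U -> exists al : 'I_(\dim U) -> k, a = \sum_c al c *: v c.
Proof.
move=> vU vi a aU.
pose X := [tuple v c | c < \dim U].
have nthX (c : 'I_(\dim U)) : X`_c = v c by rewrite nth_mktuple.
have fX : free X.
  by apply/freeP => al; under eq_bigr do rewrite nthX; apply: vi.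
have sub : (<<X>> <= U)%VS.
  by apply/span_subvP => w /tnthP[c ->]; rewrite tnth_mktuple.
have eqU : <<X>>%VS = U.
  apply/eqP; rewrite eqEdim sub /=.
  by move: fX; rewrite /free size_tuple => /eqP ->.
rewrite -eqU in aU; have := coord_span aU => ->.
by exists (fun c => coord X c a); apply: eq_bigr => c _; rewrite nthX.
Qed.


Lemma key e i Q : gr_rep G l r e Q -> gr_maxrank G l r Q i e ->
  exists2 q : {poly k}, q != 0 &
    forall s, q.[s] != 0 -> mult_maxrank G (Phi s^-1 Q) i e.
Proof.
move=> HQ [Hinj | Hsurj].
  have [x [xr xi]] := lemmaD i.
  pose y c := gr_mul Q (x c).
  have yr c : gr_rep G l r (i + e) (y c) by rewrite addnC; apply: rep_mul.
  have yi : indep (i + e) y.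
    move=> al Z; apply: xi; apply: Hinj; first exact: rep_lin.
    by move=> j jr; rewrite grmul_lin; apply: Z.
  have [q qn Hq] := claimC yr yi.
  exists q => // s qs; left => a aG Ha.
  have PhiY c : Phi s^-1 Q * Phi s^-1 (x c) = Phi s^-1 (y c).
    by rewrite (PhiM _ (rep_ladic HQ) (rep_ladic (xr c))).
  have xind : forall al : 'I_(\dim (G i)) -> k,
      \sum_c al c *: Phi s^-1 (x c) = 0 -> forall c, al c = 0.
    move=> al Hal; apply: (Hq s qs).
    under eq_bigr do rewrite -PhiY scalerAr.
    by rewrite -mulr_sumr Hal mulr0.
  have [al aE] := span_full (fun c => Phi_mem s^-1 (xr c)) xind aG.
  move: Ha; rewrite aE mulr_sumr.
  under eq_bigr do rewrite -scalerAr PhiY.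
  by move/(Hq s qs) => H0; apply: big1 => c _; rewrite H0 scale0r.
have [z [zr zi]] := lemmaD (i + e).
have [x xr xz] := fin_all_exists2 (fun c => Hsurj (z c) (zr c)).
pose y c := gr_mul Q (x c).
have yr c : gr_rep G l r (i + e) (y c) by rewrite addnC; apply: rep_mul.
have yi : indep (i + e) y.
  move=> al Z; apply: zi => j jr.
  have E : \sum_c al c *: z c j =
      \sum_c al c *: (z c j - gr_mul Q (x c) j) + \sum_c al c *: y c j.
    by rewrite -big_split /=; apply: eq_bigr => c _; rewrite -scalerDr subrK.
  by rewrite E; apply: memvD; [apply: (zero_lin al xz) | apply: Z].
have [q qn Hq] := claimC yr yi.
exists q => // s qs; right => b bG.
have PhiY c : Phi s^-1 Q * Phi s^-1 (x c) = Phi s^-1 (y c).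
  by rewrite (PhiM _ (rep_ladic HQ) (rep_ladic (xr c))).
have [al ->] := span_full (fun c => Phi_mem s^-1 (yr c)) (Hq s qs) bG.
exists (\sum_c al c *: Phi s^-1 (x c)).
  by apply: memv_suml => c _; apply: memvZ; apply: Phi_mem.
rewrite mulr_sumr; apply: eq_bigr => c _; by rewrite -scalerAr PhiY.
Qed.

End Main.

Lemma top_deg (k : fieldType) (A : falgType k) (G : nat -> {vspace A}) :
  std_graded_artinian G -> exists T, forall i, (T <= i)%N -> G i = 0%VS.
Proof.
case=> _ [Hdir [n Hn] _ _ _]; exists n => m nm.
have := Hdir m.+1; move/directv_sumP => /(_ ord_max isT).
have -> : (\sum_(j < m.+1 | true && (j != ord_max)) G j)%VS = fullv.
  apply/eqP; rewrite eqEsubv subvf /= -Hn; apply/subv_sumP => j _.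
  have jm : (j < m.+1)%N by rewrite ltnS (leq_trans (ltnW (ltn_ord j))).
  apply: (sumv_sup (Ordinal jm)) => //=.
  by rewrite -val_eqE /= neq_ltn (leq_trans (ltn_ord j)).
by rewrite capvf.
Qed.

Lemma combine (k : fieldType) (P : nat -> k -> Prop) n :
  (forall i, (i < n)%N -> exists2 q : {poly k}, q != 0 & forall s, q.[s] != 0 -> P i s) ->
  exists2 q : {poly k}, q != 0 & forall s, q.[s] != 0 -> forall i, (i < n)%N -> P i s.
Proof.
elim: n => [_|n IH H]; first by exists 1 => //; rewrite oner_eq0.
have [q1 q1n H1] := IH (fun i lt => H i (ltnW lt)).
have [q2 q2n H2] := H n (ltnSn n).
exists (q1 * q2); first by rewrite mulf_neq0.
move=> s; rewrite hornerM mulf_eq0 negb_or => /andP[s1 s2] i.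
by rewrite ltnS leq_eqVlt => /orP[/eqP ->|]; [apply: H2 | apply: H1].
Qed.

Lemma nonroot (k : fieldType) (q : {poly k}) : [pchar k] =i pred0 -> q != 0 ->
  exists s, q.[s] != 0.
Proof.
move=> /pcharf0P ch qn.
have inj : injective (fun n : nat => n%:R : k).
  move=> m n /= /eqP; wlog mn : m n / (m <= n)%N.
    move=> W; case/orP: (leq_total m n) => [mn|nm] E; first exact: W.
    by apply/esym/W => //; rewrite eq_sym.
  rewrite eq_sym -subr_eq0 -natrB // ch subn_eq0 => nm; apply/eqP.
  by rewrite eqn_leq mn nm.
pose rs := [seq i%:R : k | i <- iota 0 (size q)].
have urs : uniq rs by rewrite map_inj_uniq ?iota_uniq.
case: (boolP (all (root q) rs)) => [allr|].
  by have := max_poly_roots qn allr urs; rewrite size_map size_iota ltnn.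
by rewrite -has_predC => /hasP[x _ /= xr]; exists x.
Qed.

Section Fwd.
Variables (k : fieldType) (A : falgType k) (G : nat -> {vspace A}).

Lemma I0 x d : (x \in idl G 0 0 d) = (x \in G d).
Proof.
rewrite /idl memv_cap; case: (x \in G d); rewrite ?andbF ?andbT //.
by apply/mem_lineA; exists x; rewrite expr0 mul1r.
Qed.

Lemma I1 x d : (x \in idl G 0 1 d) = (x == 0).
Proof.
rewrite /idl memv_cap; apply/andP/eqP => [[/mem_lineA[w ->] _]|->].
  by rewrite expr1 mul0r.
by rewrite !mem0v.
Qed.

Lemma grmul0 (P x : nat -> A) : gr_mul P x 0 = P 0%N * x 0%N.
Proof. by rewrite /gr_mul big_ord1. Qed.

Lemma grexp0 (P : nat -> A) d : gr_exp P d 0 = P 0%N ^+ d.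
Proof.
elim: d => [|d IH]; first by rewrite expr0.
by rewrite /= grmul0 -/(gr_exp P d) IH exprS.
Qed.

Lemma lt1 j : (j < 1)%N -> j = 0%N.
Proof. by rewrite ltnS leqn0 => /eqP. Qed.

Lemma fwd_max (f : A) i e (P : nat -> A) : P 0%N = f ->
  mult_maxrank G f i e -> gr_maxrank G 0 1 P i e.
Proof.
move=> P0 [Hi|Hs]; [left|right].
  move=> x xr xz j /lt1 ->; rewrite I1; apply/eqP; apply: Hi.
    by rewrite -I0; apply: xr.
  by have := xz 0%N isT; rewrite I1 grmul0 P0 => /eqP.
move=> y yr; have yG : y 0%N \in G (i + e) by rewrite -I0; apply: yr.
have [x0 x0G Hx] := Hs (y 0%N) yG.
exists (fun _ => x0); first by move=> j /lt1 ->; rewrite I0.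
by move=> j /lt1 ->; rewrite I1 grmul0 P0 Hx subrr.
Qed.

Lemma nil01 : nil_index (0 : A) 1.
Proof. by split; [rewrite expr1 | move=> s /lt1 ->; rewrite expr0 oner_neq0]. Qed.

Lemma rep01 (ell : A) : ell \in G 1 -> gr_rep G 0 1 1 (fun _ => ell).
Proof. by move=> H j /lt1 ->; rewrite I0. Qed.

End Fwd.

Unset Implicit Arguments.

Theorem theorem2p12 (k : fieldType) (A : falgType k) (G : nat -> {vspace A}) :
  [pchar k] =i pred0 ->
  std_graded_artinian G ->
  (WLP G <-> exists2 l, l \in G 1%N & Gr_WLP G l) /\
  (SLP G <-> exists2 l, l \in G 1%N & Gr_SLP G l).
Proof.
move=> ch S.
have comm := S.1; have [Hdir Hfull G0' Gmul Gen] := S.2.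
have G0 : 1 \in G 0 by rewrite G0' memv_line.
have [T HT] := top_deg S.
have rpos (l : A) r : l ^+ r = 0 -> (0 < r)%N.
  by case: r => // /eqP; rewrite expr0 oner_eq0.
split; split.
- case=> ell ellG H; exists 0; first exact: mem0v.
  exists 1%N; first exact: nil01.
  by exists (fun _ => ell); [exact: rep01 | move=> i; apply: fwd_max (H i)].
- case=> l lG [r [lr0 _] [L Lr HL]].
  have [q qn Hq] := combine (P := fun i s => mult_maxrank G (Phi r s^-1 L) i 1)
    (n := T) (fun i _ => key comm lr0 Gmul Lr (HL i)).
  have [s qs] := nonroot ch qn.
  exists (Phi r s^-1 L); first by move: (Phi_mem s^-1 Lr).
  move=> i; case: (ltnP i T) => iT; first exact: Hq.
  by left => x; rewrite HT // memv0 => /eqP ->.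
- case=> ell ellG H; exists 0; first exact: mem0v.
  exists 1%N; first exact: nil01.
  exists (fun _ => ell); first exact: rep01.
  by move=> d i d0; apply: fwd_max (H d i d0); rewrite grexp0.
case=> l lG [r [lr0 _] [L Lr HL]].
have r0 := rpos l r lr0.
have Hk : forall d i, (i < T)%N -> exists2 q : {poly k}, q != 0 &
    forall s, q.[s] != 0 -> mult_maxrank G (Phi r s^-1 L ^+ d.+1) i d.+1.
  move=> d i _.
  have Er : gr_rep G l r d.+1 (gr_exp L d.+1).
    by have := rep_exp comm Gmul G0 d.+1 Lr; rewrite mul1n.
  have [q' qn' Hq'] := key comm lr0 Gmul Er (HL d.+1 i isT).
  exists q' => // s qs'.
  by rewrite -(Phi_exp comm lr0 Gmul G0 s^-1 d.+1 r0 Lr); apply: Hq'.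
have [q qn Hq] := combine
  (P := fun d s => forall i, (i < T)%N -> mult_maxrank G (Phi r s^-1 L ^+ d.+1) i d.+1)
  (n := T) (fun d _ => combine
    (P := fun i s => mult_maxrank G (Phi r s^-1 L ^+ d.+1) i d.+1) (n := T) (Hk d)).
have [s qs] := nonroot ch qn.
exists (Phi r s^-1 L); first by move: (Phi_mem s^-1 Lr).
move=> [//|d] i _.
case: (ltnP i T) => iT; last by left => x; rewrite HT // memv0 => /eqP ->.
case: (ltnP d T) => dT; first exact: Hq.
right => y; rewrite HT; last by apply: (leq_trans dT); rewrite addnS ltnW // ltnS leq_addl.
by rewrite memv0 => /eqP ->; exists 0; rewrite ?mem0v ?mulr0.
Qed.
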